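(* In the setting described in the context, let $\Lambda > 1$ be a constant such that for every $x \in \Omega$ and all nonnegative reals $a_0,\dots,a_q$ with $a_i = 0$ whenever $u_i(x) \leq -2\Lambda^{-1}$, one has $\sum_{i=0}^q a_i \leq \Lambda |\sum_{i=0}^q a_i N_i|$. Then for every $\gamma \in (0,\frac12)$ there exists $\bar\lambda$ such that for all $\lambda_0 \geq \bar\lambda$ the following holds: if $0 \leq k \leq q$ and $x \in \Omega$ satisfies $-\Lambda^{-1} \leq \hat u_k(x) \leq 0$, then $|d\hat u_k| \geq \Lambda^{-1}$ at $x$. In particular, $\hat\Sigma = \{\hat u_q = 0\}$ is a smooth hypersurface.
   Context: $n\ge3$; $u_0,\dots,u_q$ are non-constant linear (affine) functions on $\mathbb{R}^n$ and $\Omega=\bigcap_{m=0}^q\{u_m\le 0\}$ is a compact convex polytope with non-empty interior, such that: (a) for each $k$, $\{u_k>0\}\cap\bigcap_{m\neq k}\{u_m\le0\}\neq\emptyset$; (b) the Euclidean gradient of each $u_k$ is a unit vector $N_k$; (c) for $j<k$, if some $x\in\Omega$ has $u_j(x)=u_k(x)=0$ then $\langle N_j,N_k\rangle\le0$. Fix a smooth even $\eta:\mathbb{R}\to\mathbb{R}$ with $\eta(t)=|t|$ for $|t|\ge\frac12$ and $\eta''\ge0$. For $\gamma\in(0,\frac12)$, $\lambda_0>1$ put $\lambda_k=\gamma^{-k}\lambda_0$, $\hat u_0=u_0$, $\hat u_k=\frac12\big(\hat u_{k-1}+u_k+\lambda_k^{-1}\eta(\lambda_k(\hat u_{k-1}-u_k))\big)$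 for $1\le k\le q$. *)

(* Defs.v *)
From HB Require Import structures.
From mathcomp Require Import all_boot all_order all_algebra.
From mathcomp Require Import all_classical all_reals all_analysis.
Set Implicit Arguments. Unset Strict Implicit. Unset Printing Implicit Defensive.
Import Order.TTheory GRing.Theory Num.Theory.
Import numFieldNormedType.Exports.
Local Open Scope classical_set_scope.
Local Open Scope ring_scope.

Section Defs.
Variable R : realType.

Definition dotp n (x y : 'rV[R]_n) : R := \sum_(i < n) x 0 i * y 0 i.
Definition enorm n (x : 'rV[R]_n) : R := Num.sqrt (dotp x x).

Definition affine_fn n (N : 'rV[R]_n) (c : R) : 'rV[R]_n -> R :=
  fun x => dotp N x + c.

Definition grad n (f : 'rV[R]_n -> R) (x : 'rV[R]_n) : 'rV[R]_n :=
  \row_(i < n) ('D_(delta_mx 0 i) f x).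

Definition smooth_fun (f : R -> R) : Prop :=
  forall (k : nat) (t : R), derivable (derive1n k f) t 1.

Definition Omega n (q : nat) (N : nat -> 'rV[R]_n) (c : nat -> R) : set 'rV[R]_n :=
  [set x | forall m, (m <= q)%N -> affine_fn (N m) (c m) x <= 0].

Definition lam (gamma lambda0 : R) (k : nat) : R := (gamma ^- k) * lambda0.

Fixpoint uhat n (N : nat -> 'rV[R]_n) (c : nat -> R) (eta : R -> R)
    (gamma lambda0 : R) (k : nat) : 'rV[R]_n -> R :=
  match k with
  | 0%N => affine_fn (N 0%N) (c 0%N)
  | k'.+1 => fun x =>
      let a := uhat N c eta gamma lambda0 k' x in
      let b := affine_fn (N k'.+1) (c k'.+1) x in
      let l := lam gamma lambda0 k'.+1 in
      2^-1 * (a + b + l^-1 * eta (l * (a - b)))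
  end.

End Defs.

(* Main.v *)
Require Import Defs.
From HB Require Import structures.
From mathcomp Require Import all_boot all_order all_algebra.
From mathcomp Require Import all_classical all_reals all_analysis.
From mathcomp Require Import ring lra.
Import Order.TTheory GRing.Theory Num.Theory.
Import numFieldNormedType.Exports.
Local Open Scope classical_set_scope.
Local Open Scope ring_scope.

Section Eta.
Variable R : realType.
Variable eta : R -> R.
Hypothesis sm : smooth_fun eta.
Hypothesis ev : forall t, eta (- t) = eta t.
Hypothesis habs : forall t, 2^-1 <= `|t| -> eta t = `|t|.
Hypothesis d2 : forall t, 0 <= derive1n 2 eta t.

Lemma eta_der t : derivable eta t 1. Proof. exact: (sm 0 t). Qed.
Lemma etad_der t : derivable (derive1 eta) t 1. Proof. exact: (sm 1 t). Qed.

Lemma etad_mono s t : s <= t -> derive1 eta s <= derive1 eta t.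
Proof.
move=> st.
apply: (@ger0_derive1_ndecr _ (derive1 eta) s t) => //.
- by move=> y _; exact: etad_der.
- by move=> y _; exact: (d2 y).
- by apply: derivable_within_continuous => y _; exact: etad_der.
Qed.

Lemma etad_pos t : 2^-1 < t -> derive1 eta t = 1.
Proof.
move=> ht; rewrite derive1E.
have -> : 'D_1 eta t = 'D_1 id t.
  apply: near_eq_derive; near=> y.
  have hy : 2^-1 < y by near: y; exact: lt_nbhsr.
  have y0 : 0 <= y by lra.
  rewrite habs (ger0_norm y0) //; lra.
by rewrite derive_id.
Unshelve. all: by end_near. Qed.

Lemma etad_neg t : t < - 2^-1 -> derive1 eta t = -1.
Proof.
move=> ht; rewrite derive1E.
have -> : 'D_1 eta t = 'D_1 (fun y : R => - y) t.
  apply: near_eq_derive; near=> y.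
  have hy : y < - 2^-1 by near: y; exact: lt_nbhsl.
  have y0 : y < 0 by lra.
  rewrite habs (ltr0_norm y0) //; lra.
have := @is_deriveNid R R^o t 1.
by move=> H; rewrite (@derive_val _ _ _ _ _ _ _ H).
Unshelve. all: by end_near. Qed.

Lemma etad_bound t : -1 <= derive1 eta t <= 1.
Proof.
have h1 := @etad_mono (- (`|t| + 1)) t.
have h2 := @etad_mono t (`|t| + 1).
rewrite etad_neg in h1; last by have := normr_ge0 t; move=> ?; lra.
rewrite (@etad_pos (`|t| + 1)) in h2; last by have := normr_ge0 t; move=> ?; lra.
apply/andP; split.
- apply: h1. have := ler_norm (- t); rewrite normrN; lra.
- apply: h2. have := ler_norm t; lra.
Qed.

Lemma eta_isd (x : R) : is_derive x (1 : R) eta (derive1 eta x).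
Proof. rewrite derive1E; apply: derivableP; exact: eta_der. Qed.

Lemma eta_cont a b : {within `[a, b], continuous eta}.
Proof. by apply: derivable_within_continuous => y _; exact: eta_der. Qed.

Lemma eta_lip s t : eta t - eta s <= `|t - s|.
Proof.
case: (leP s t) => st.
  have [c _ ->] := MVT_segment st (fun x _ => eta_isd x) (eta_cont s t).
  have := etad_bound c; rewrite ger0_norm ?subr_ge0 // => /andP[_ h].
  have : 0 <= t - s by lra.
  nra.
have [c _ e] := MVT_segment (ltW st) (fun x _ => eta_isd x) (eta_cont t s).
have := etad_bound c; rewrite ltr0_norm ?subr_lt0 // => /andP[h _].
have : 0 <= s - t by lra.
nra.
Qed.

Lemma eta_ge t : `|t| <= eta t.
Proof.
have key : forall t, t <= eta t.
  move=> y; case: (lerP y 2^-1) => hy.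
    have h := eta_lip y 2^-1.
    have e1 : eta 2^-1 = 2^-1 by rewrite habs ger0_norm //; lra.
    have e2 : `|2^-1 - y| = 2^-1 - y by rewrite ger0_norm //; lra.
    lra.
  have y0 : 0 <= y by lra.
  rewrite habs (ger0_norm y0) //; lra.
case: (lerP 0 t) => ht.
  by rewrite ger0_norm //.
by rewrite ltr0_norm // -ev.
Qed.

Lemma eta_le t : eta t <= `|t| + 1.
Proof.
have h := eta_lip 2^-1 t.
have e1 : eta 2^-1 = 2^-1 by rewrite habs ger0_norm //; lra.
have h2 := ler_normB t 2^-1.
have e2 : `|2^-1 : R| = 2^-1 by rewrite ger0_norm //; lra.
lra.
Qed.

End Eta.

Section Line.
Variable R : realType.
Variable V : normedModType R.

Lemma line_fun (f : V -> R) (x v : V) :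
  (fun h : R => h^-1 *: ((f \o shift x) (h *: v) - f x)) =
  (fun h : R => h^-1 *: (((fun h : R => f (h *: v + x)) \o shift 0) (h *: 1)
     - (fun h : R => f (h *: v + x)) 0)).
Proof. by apply/funext => h /=; rewrite addr0 scale0r add0r [h *: 1]mulr1. Qed.

Lemma is_derive_line (f : V -> R) (x v : V) (d : R) :
  is_derive x v f d <-> is_derive (0 : R) (1 : R) (fun h : R => f (h *: v + x)) d.
Proof.
have E1 : derivable f x v = derivable (fun h : R => f (h *: v + x)) 0 1.
  by rewrite /derivable line_fun.
have E2 : 'D_v f x = 'D_1 (fun h : R => f (h *: v + x)) 0.
  by rewrite /derive line_fun.
split=> -[d1 d2]; split.
- by rewrite -E1.
- by rewrite -E2.
- by rewrite E1.
- by rewrite E2.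
Qed.

Lemma is_derive_comp1 (g : R -> R) (f : V -> R) (x v : V) (d : R) :
  (forall t, derivable g t 1) ->
  is_derive x v f d -> is_derive x v (fun y => g (f y)) (derive1 g (f x) * d).
Proof.
move=> dg /is_derive_line H; apply/is_derive_line.
set phi := fun h : R => f (h *: v + x).
have phi0 : phi 0 = f x by rewrite /phi scale0r add0r.
have dphi : derivable phi 0 1 := @ex_derive _ _ _ _ _ _ _ H.
have vphi : 'D_1 phi 0 = d := @derive_val _ _ _ _ _ _ _ H.
split.
- apply/derivable1_diffP.
  change (differentiable (g \o phi) 0).
  apply: differentiable_comp; apply/derivable1_diffP => //.
- rewrite -derive1E.
  change ((g \o phi)^`()%classic 0 = derive1 g (f x) * d).
  by rewrite derive1_comp // phi0; congr (_ * _); rewrite derive1E.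
Qed.

End Line.

Section Deriv.
Variables (R : realType) (n : nat).
Implicit Types (N v x : 'rV[R]_n).

Lemma affine_line N c (h : R) v x :
  affine_fn N c (h *: v + x) = h * dotp N v + affine_fn N c x.
Proof.
rewrite /affine_fn /dotp addrA; congr (_ + _).
rewrite mulr_sumr -big_split; apply: eq_bigr => i _; rewrite !mxE /=; ring.
Qed.

Lemma is_derive_affine N c x v : is_derive x v (affine_fn N c) (dotp N v).
Proof.
apply/is_derive_line.
have -> : (fun h : R => affine_fn N c (h *: v + x)) =
   (dotp N v) \*: (fun h : R => h) + cst (affine_fn N c x).
  by apply/funext => h; rewrite affine_line /= mulrC.
have H1 : is_derive (0:R) (1:R) ((dotp N v) \*: (fun h : R => h)) (dotp N v *: 1).
  apply: is_deriveZ.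
have H2 := @is_deriveD R R R _ _ 0 1 _ _ H1 (is_derive_cst (affine_fn N c x) (0:R) (1:R)).
have e : dotp N v *: (1:R) + 0 = dotp N v by rewrite addr0 [_ *: _]mulr1.
rewrite e in H2. exact H2.
Qed.
Lemma is_derive_step (g : R -> R) (dg : forall t, derivable g t 1)
  (A B : 'rV[R]_n -> R) x v (dA dB l : R) :
  is_derive x v A dA -> is_derive x v B dB ->
  is_derive x v (fun y => 2^-1 * (A y + B y + l^-1 * g (l * (A y - B y))))
   (2^-1 * (dA + dB + l^-1 * (derive1 g (l * (A x - B x)) * (l * (dA - dB))))).
Proof.
move=> HA HB.
have HAB := is_deriveB HA HB.
have Hl := is_deriveZ l HAB.
have He := @is_derive_comp1 R _ g _ x v _ dg Hl.
have He2 := is_deriveZ (l^-1) He.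
have Hs := is_deriveD (is_deriveD HA HB) He2.
have Hf := is_deriveZ (2^-1) Hs.
exact Hf.
Qed.

End Deriv.

Section Main.
Variables (R : realType) (n q : nat) (N : nat -> 'rV[R]_n) (c : nat -> R).
Variables (eta : R -> R) (gamma lambda0 : R).
Hypothesis sm : smooth_fun eta.
Hypothesis ev : forall t, eta (- t) = eta t.
Hypothesis habs : forall t, 2^-1 <= `|t| -> eta t = `|t|.
Hypothesis d2 : forall t, 0 <= derive1n 2 eta t.
Hypothesis hg0 : 0 < gamma.
Hypothesis hg1 : 2 * gamma < 1.
Hypothesis hl0 : 0 < lambda0.

Local Notation u i := (affine_fn (N i) (c i)).
Local Notation uh k := (uhat N c eta gamma lambda0 k).
Definition Eb k := (1 - gamma ^+ k) / lambda0.

Lemma lam_inv k : (lam gamma lambda0 k)^-1 = gamma ^+ k / lambda0.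
Proof. by rewrite /lam invfM invrK. Qed.

Lemma lam_gt0 k : 0 < lam gamma lambda0 k.
Proof. by rewrite /lam mulr_gt0 // invr_gt0 exprn_gt0. Qed.

Lemma sum_delta j : (j <= q)%N -> \sum_(i < q.+1) ((i:nat) == j)%:R = 1 :> R.
Proof.
move=> hj; have hj' : (j < q.+1)%N by [].
rewrite (bigD1 (Ordinal hj')) //= eqxx big1 ?addr0 // => i Hi.
suff -> : ((i:nat) == j) = false by [].
apply/negbTE; apply: contra Hi => /eqP e; apply/eqP/val_inj => /=; exact: e.
Qed.

Lemma sum_deltaZ j : (j <= q)%N -> \sum_(i < q.+1) ((i:nat) == j)%:R *: N i = N j.
Proof.
move=> hj; have hj' : (j < q.+1)%N by [].
rewrite (bigD1 (Ordinal hj')) //= eqxx scale1r big1 ?addr0 // => i Hi.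
suff -> : ((i:nat) == j) = false by rewrite scale0r.
apply/negbTE; apply: contra Hi => /eqP e; apply/eqP/val_inj => /=; exact: e.
Qed.

Lemma dotpDl (X Y v : 'rV[R]_n) : dotp (X + Y) v = dotp X v + dotp Y v.
Proof. by rewrite /dotp -big_split; apply: eq_bigr => i _; rewrite !mxE mulrDl. Qed.

Lemma dotpZl a (X v : 'rV[R]_n) : dotp (a *: X) v = a * dotp X v.
Proof. by rewrite /dotp mulr_sumr; apply: eq_bigr => i _; rewrite !mxE mulrA. Qed.

Lemma uh_step k x : uh k.+1 x =
  2^-1 * (uh k x + u k.+1 x + (lam gamma lambda0 k.+1)^-1 *
     eta (lam gamma lambda0 k.+1 * (uh k x - u k.+1 x))).
Proof. by []. Qed.

Lemma eta_bounds (l a b : R) : 0 < l ->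
  `|a - b| <= l^-1 * eta (l * (a - b)) <= `|a - b| + l^-1.
Proof.
move=> l0.
have hn : `|l * (a - b)| = l * `|a - b| by rewrite normrM gtr0_norm.
have il0 : 0 <= l^-1 by rewrite invr_ge0 ltW.
have h1 := @eta_ge R eta sm ev habs d2 (l * (a - b)).
have h2 := @eta_le R eta sm habs d2 (l * (a - b)).
rewrite hn in h1 h2.
have e : l^-1 * (l * `|a - b|) = `|a - b| by rewrite mulrA mulVf ?gt_eqF // mul1r.
have h1' := ler_wpM2l il0 h1; have h2' := ler_wpM2l il0 h2.
apply/andP; split.
- apply: le_trans h1'; by rewrite e.
- apply: le_trans h2' _; by rewrite mulrDr e mulr1.
Qed.

Lemma uh_ge k m : (m <= k)%N -> forall x, u m x <= uh k x.
Proof.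
elim: k m => [|k IH] m hm x.
  by move: hm; rewrite leqn0 => /eqP->.
rewrite uh_step.
have /andP[hb _] := @eta_bounds _ (uh k x) (u k.+1 x) (lam_gt0 k.+1).
have hn := ler_norm (uh k x - u k.+1 x).
have hn' := ler_norm (u k.+1 x - uh k x); rewrite distrC in hn'.
case: (ltnP k m) => hkm.
  have -> : m = k.+1 by apply/eqP; rewrite eqn_leq hm hkm.
  lra.
have := IH m hkm x; lra.
Qed.

Lemma gpow_le k : gamma ^+ k <= 1.
Proof. have h1 := hg1; have h : gamma <= 1 by lra. exact: exprn_ile1 (ltW hg0) h. Qed.

Lemma ind k : (k <= q)%N -> forall x, exists w : nat -> R,
  [/\ forall i, 0 <= w i, \sum_(i < q.+1) w i = 1, forall i, (k < i)%N -> w i = 0,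
      forall i, w i != 0 -> uh k x - Eb k <= u i x &
      forall v, is_derive x v (uh k) (dotp (\sum_(i < q.+1) w i *: N i) v)].
Proof.
elim: k => [_|k IH hk] x.
  exists (fun i => ((i:nat) == 0%N)%:R); split.
  - by move=> i; apply: ler0n.
  - exact: sum_delta.
  - by case.
  - move=> i /=; have [-> _|ne] := eqVneq i 0%N; last by rewrite mulr0n eqxx.
    by rewrite /Eb expr0 subrr mul0r subr0.
  - by move=> v; rewrite sum_deltaZ //; exact: is_derive_affine.
have hk' : (k <= q)%N by apply: ltnW.
have hg0' := hg0; have hg1' := hg1; have hl0' := hl0.
have [w [w0 w1 wk ws wd]] := IH hk' x.
set a := uh k x; set b := u k.+1 x; set l := lam gamma lambda0 k.+1.
set s := derive1 eta (l * (a - b)).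
have /andP[sl su] : -1 <= s <= 1 by apply: (@etad_bound R eta sm habs d2).
have l0 : 0 < l := lam_gt0 k.+1.
have hli : l^-1 = gamma * gamma ^+ k / lambda0 by rewrite /l lam_inv exprS.
set g := gamma ^+ k.
have g0 : 0 < g by rewrite exprn_gt0.
have g1 : g <= 1 := gpow_le k.
set il := lambda0^-1.
have il0 : 0 < il by rewrite invr_gt0.
have hEk : Eb k = (1 - g) * il by [].
have hEk1 : Eb k.+1 = (1 - gamma * g) * il by rewrite /Eb exprS.
have hli' : l^-1 = gamma * g * il by rewrite hli.
have /andP[_ hup] := @eta_bounds l a b l0.
have hstep : uh k.+1 x = 2^-1 * (a + b + l^-1 * eta (l * (a - b))) by [].
exists (fun i => (1 + s) / 2 * w i + (1 - s) / 2 * ((i:nat) == k.+1)%:R); split.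
- move=> i; apply: addr_ge0; apply: mulr_ge0; try apply: ler0n; try apply: w0; lra.
- rewrite big_split /= -!mulr_sumr w1 sum_delta //; lra.
- move=> i hi; rewrite wk ?(ltnW hi) // (gtn_eqF hi) /=; lra.
- move=> i /=; have [ei|nei] := eqVneq i k.+1.
    rewrite ei wk // mulr0 add0r mulr1n mulr1 => hne.
    have ht : l * (a - b) <= 2^-1.
      rewrite leNgt; apply/negP => ht.
      move: hne; rewrite /s (@etad_pos R eta habs _ ht) subrr mul0r eqxx //.
    have e : a - b = l^-1 * (l * (a - b)) by rewrite mulrA mulVf ?gt_eqF // mul1r.
    have hab : a - b <= l^-1 / 2 by rewrite e ler_pM2l ?invr_gt0.
    rewrite -/a -/b -/l hEk1.
    have gg : gamma * g <= gamma by nra.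
    have hm : gamma * g * il <= (1 - gamma * g) * il by nra.
    rewrite hli' in hup hab *.
    case: (lerP 0 (a - b)) => hs; [rewrite ger0_norm // in hup | rewrite ltr0_norm // in hup]; lra.
  rewrite mulr0n mulr0 addr0 => hne.
  have wi : w i != 0 by apply: contraNneq hne => ->; rewrite mulr0.
  have hs1 : s != -1 by apply: contraNneq hne => ->; rewrite addrN mul0r mul0r.
  have ht : - 2^-1 <= l * (a - b).
    rewrite leNgt; apply/negP => ht.
    by move: hs1; rewrite /s (@etad_neg R eta habs _ ht) eqxx.
  have e : a - b = l^-1 * (l * (a - b)) by rewrite mulrA mulVf ?gt_eqF // mul1r.
  have hab : - (l^-1 / 2) <= a - b by rewrite e -mulrN ler_pM2l ?invr_gt0.
  have hi := ws i wi.
  rewrite -/a -/b -/l.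
  rewrite -/a hEk in hi; rewrite hEk1.
  have gil : 0 < g * il by rewrite mulr_gt0.
  have hm2 : gamma * g * il + gamma * g * il <= g * il by nra.
  rewrite hli' in hup hab *.
  case: (lerP 0 (a - b)) => hs; [rewrite ger0_norm // in hup | rewrite ltr0_norm // in hup]; lra.
- move=> v.
  have H := @is_derive_step R n eta (@eta_der R eta sm) _ _ x v _ _ l (wd v)
     (@is_derive_affine R n (N k.+1) (c k.+1) x v).
  set G := \sum_(i < q.+1) w i *: N i.
  have eG : \sum_(i < q.+1) ((1 + s) / 2 * w i + (1 - s) / 2 * ((i:nat) == k.+1)%:R) *: N i
      = (1 + s) / 2 *: G + (1 - s) / 2 *: N k.+1.
    rewrite -(@sum_deltaZ k.+1 hk) /G !scaler_sumr -big_split /=.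
    by apply: eq_bigr => i _; rewrite scalerDl !scalerA.
  rewrite eG dotpDl !dotpZl.
  set dA := dotp G v; set dB := dotp (N k.+1) v.
  have -> : (1 + s) / 2 * dA + (1 - s) / 2 * dB =
     2^-1 * (dA + dB + l^-1 * (s * (l * (dA - dB)))).
    by field; rewrite gt_eqF.
  exact H.
Qed.

End Main.

Lemma dotp_delta (R : realType) n (X : 'rV[R]_n) j : dotp X (delta_mx 0 j) = X 0 j.
Proof.
rewrite /dotp (bigD1 j) //= big1 => [|i hij]; last first.
  by rewrite mxE eqxx /= (negbTE hij) mulr0.
by rewrite mxE !eqxx mulr1 addr0.
Qed.

Theorem lemma2p10 (R : realType) (n q : nat) (N : nat -> 'rV[R]_n) (c : nat -> R)
  (eta : R -> R) (Lambda : R) :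
  (3 <= n)%N ->
  compact (Omega q N c) ->
  (interior (Omega q N c)) !=set0 ->
  (forall k, (k <= q)%N -> exists x : 'rV[R]_n,
      0 < affine_fn (N k) (c k) x /\
      forall m, (m <= q)%N -> m <> k -> affine_fn (N m) (c m) x <= 0) ->
  (forall k, (k <= q)%N -> enorm (N k) = 1) ->
  (forall j k, (j < k)%N -> (k <= q)%N ->
      (exists x, Omega q N c x /\ affine_fn (N j) (c j) x = 0 /\
                 affine_fn (N k) (c k) x = 0) ->
      dotp (N j) (N k) <= 0) ->
  smooth_fun eta ->
  (forall t, eta (- t) = eta t) ->
  (forall t, 2^-1 <= `|t| -> eta t = `|t|) ->
  (forall t, 0 <= derive1n 2 eta t) ->
  1 < Lambda ->
  (forall x, Omega q N c x -> forall a : nat -> R,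
      (forall i, (i <= q)%N -> 0 <= a i) ->
      (forall i, (i <= q)%N -> affine_fn (N i) (c i) x <= - (2 / Lambda) -> a i = 0) ->
      \sum_(i < q.+1) a i <= Lambda * enorm (\sum_(i < q.+1) a i *: N i)) ->
  forall gamma : R, 0 < gamma < 2^-1 ->
  exists lambdabar : R, forall lambda0 : R, 1 < lambda0 -> lambdabar <= lambda0 ->
    (forall k, (k <= q)%N -> forall x, Omega q N c x ->
       - Lambda^-1 <= uhat N c eta gamma lambda0 k x <= 0 ->
       Lambda^-1 <= enorm (grad (uhat N c eta gamma lambda0 k) x))
    /\
    (forall x, uhat N c eta gamma lambda0 q x = 0 ->
       grad (uhat N c eta gamma lambda0 q) x != 0).
Proof.
move=> _ _ _ _ _ _ sm ev habs d2 hL hLam gamma /andP[hg0 hg1].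
exists (2 * Lambda) => lambda0 hl1 hle.
have hl0 : 0 < lambda0 by lra.
have hg1' : 2 * gamma < 1 by lra.
have hL0 : 0 < Lambda by lra.
have part1 : forall k, (k <= q)%N -> forall x, Omega q N c x ->
       - Lambda^-1 <= uhat N c eta gamma lambda0 k x <= 0 ->
       Lambda^-1 <= enorm (grad (uhat N c eta gamma lambda0 k) x).
  move=> k hk x hx /andP[hlo hhi].
  have [w [w0 w1 wk ws wd]] :=
    @ind R n q N c eta gamma lambda0 sm ev habs d2 hg0 hg1' hl0 k hk x.
  set G := \sum_(i < q.+1) w i *: N i.
  have hgrad : grad (uhat N c eta gamma lambda0 k) x = G.
    apply/rowP => j; rewrite mxE (@derive_val _ _ _ _ _ _ _ (wd _)).
    by rewrite dotp_delta.
  rewrite hgrad.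
  have hE : Eb R gamma lambda0 k <= lambda0^-1.
    rewrite /Eb -[X in _ <= X]mul1r ler_wpM2r ?invr_ge0 ?ltW //.
    have := exprn_gt0 k hg0; lra.
  have hil : lambda0^-1 <= (2 * Lambda)^-1.
    rewrite lef_pV2 ?posrE //; lra.
  rewrite invfM in hil.
  have hsum := hLam x hx w (fun i _ => w0 i).
  rewrite w1 in hsum.
  have {}hsum : 1 <= Lambda * enorm G.
    apply: hsum => i _ hi.
    case: (eqVneq (w i) 0) => // /ws hw; exfalso.
    have hiL : 0 < Lambda^-1 by rewrite invr_gt0.
    move: hi; lra.
  rewrite -(ler_pM2l hL0) mulfV ?gt_eqF //.
split; first exact: part1.
move=> x hx0.
have hO : Omega q N c x.
  move=> m hm; rewrite -hx0.
  exact: (@uh_ge R n N c eta gamma lambda0 sm ev habs d2 hg0 hl0 q m hm x).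
have := part1 q (leqnn q) x hO.
rewrite hx0 lexx andbT oppr_le0 invr_ge0 ltW // => /(_ isT).
apply: contraTneq => ->.
rewrite /enorm /dotp big1 => [|i _]; last by rewrite mxE mul0r.
by rewrite sqrtr0 -ltNge invr_gt0.
Qed.
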